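(* Let $G$ be a connected graph with $\omega(G)=n(G)-3$. Then $$n(G)-8\le \dim_l(G)\le n(G)-3.$$ Furthermore, both bounds are sharp, i.e., for each bound there exist connected graphs $G$ with $\omega(G)=n(G)-3$ attaining it.
   Context: All graphs are finite and simple. $n(G)$ is the number of vertices and $\omega(G)$ the clique number of $G$. For vertices $x,y$ of a connected graph $G$, $d_G(x,y)$ is the length of a shortest $x,y$-path. A vertex $w$ distinguishes vertices $u,v$ if $d_G(u,w)\neq d_G(v,w)$. A set $W\subseteq V(G)$ is a local resolving set of $G$ if for every pair of adjacent vertices $u,v\in V(G)\setminus W$ some vertex of $W$ distinguishes $u$ and $v$. The local metric dimension $\dim_l(G)$ is the minimum cardinality of a local resolving set of $G$. *)

(* Defs.v *)
From mathcomp Require Import all_boot.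
Set Implicit Arguments. Unset Strict Implicit. Unset Printing Implicit Defensive.

Definition simple_graph (T : finType) (e : rel T) : Prop :=
  symmetric e /\ irreflexive e.

Definition connected_graph (T : finType) (e : rel T) : Prop :=
  0 < #|T| /\ forall x y : T, connect e x y.

Fixpoint ball (T : finType) (e : rel T) (k : nat) (x : T) : {set T} :=
  match k with
  | 0 => [set x]
  | k'.+1 => ball e k' x :|: [set y | [exists z in ball e k' x, e z y]]
  end.

(* d_G(x,y): least k such that y is within distance k of x (for a connected
   graph this is < #|T|, hence found in iota 0 #|T|). *)
Definition dist (T : finType) (e : rel T) (x y : T) : nat :=
  find (fun k => y \in ball e k x) (iota 0 #|T|).

Definition clique (T : finType) (e : rel T) (A : {set T}) : bool :=
  [forall x in A, forall y in A, (x != y) ==> e x y].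

Definition clique_number (T : finType) (e : rel T) : nat :=
  \max_(A : {set T} | clique e A) #|A|.

Definition local_resolving (T : finType) (e : rel T) (W : {set T}) : bool :=
  [forall u, forall v, [&& u \notin W, v \notin W & e u v] ==>
     [exists w in W, dist e u w != dist e v w]].

Lemma setT_local_resolving (T : finType) (e : rel T) :
  local_resolving e [set: T].
Proof. by apply/forallP => u; apply/forallP => v; rewrite in_setT. Qed.

Definition local_dim (T : finType) (e : rel T) : nat :=
  #|[arg min_(W < [set: T] | local_resolving e W) #|W|]|.

(* Main.v *)
Require Import Defs.
From mathcomp Require Import all_boot.
From mathcomp Require Import zify.
From Stdlib Require Import Classical.
Set Implicit Arguments. Unset Strict Implicit. Unset Printing Implicit Defensive.

Lemma ball_adj (T : finType) (e : rel T) k x x' :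
  e x' x -> ball e k x \subset ball e k.+1 x'.
Proof.
move=> exx; elim: k => [|k IH].
  rewrite sub1set /= !inE; apply/orP; right; apply/existsP; exists x'.
  by rewrite !inE eqxx exx.
apply/subsetP => y; rewrite [ball e k.+1 x]/= inE => /orP[/(subsetP IH) yb|].
  by rewrite [ball e k.+2 x']/= inE yb.
rewrite inE => /existsP[z /andP[zb ezy]].
rewrite [ball e k.+2 x']/= inE; apply/orP; right; rewrite inE.
by apply/existsP; exists z; rewrite (subsetP IH) // ezy.
Qed.

Lemma dist_le (T : finType) (e : rel T) x y k :
  k < #|T| -> y \in ball e k x -> dist e x y <= k.
Proof.
move=> kn yb; rewrite /dist leqNgt; apply/negP => /(before_find 0).
by rewrite nth_iota // add0n yb.
Qed.

Lemma dist_size (T : finType) (e : rel T) x y : dist e x y <= #|T|.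
Proof. by rewrite /dist -{2}(size_iota 0 #|T|) find_size. Qed.

Lemma dist_ball (T : finType) (e : rel T) x y :
  dist e x y < #|T| -> y \in ball e (dist e x y) x.
Proof.
move=> lt; have := lt; rewrite /dist -{2}(size_iota 0 #|T|) -has_find => hf.
by have := nth_find 0 hf; rewrite nth_iota // add0n.
Qed.

Lemma dist1 (T : finType) (e : rel T) x y :
  x != y -> e x y -> dist e x y = 1.
Proof.
move=> xy exy.
have n2 : 1 < #|T| by apply/card_gt1P; exists x, y.
have d1 : dist e x y <= 1.
  by apply: dist_le => //=; rewrite !inE; apply/orP; right; apply/existsP; exists x; rewrite !inE eqxx exy.
case d0 : (dist e x y) => [|[|n]]; rewrite ?d0 // in d1.
have := @dist_ball T e x y; rewrite d0 /= inE => /(_ (leq_ltn_trans (leq0n 1) n2)) /eqP yx.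
by rewrite yx eqxx in xy.
Qed.

Lemma dist_not1 (T : finType) (e : rel T) x y :
  x != y -> ~~ e x y -> dist e x y != 1.
Proof.
move=> xy nexy; apply/eqP => d1.
have n2 : 1 < #|T| by apply/card_gt1P; exists x, y.
have := @dist_ball T e x y; rewrite d1 => /(_ n2).
rewrite /= !inE => /orP[/eqP yx|/existsP[z]]; first by rewrite yx eqxx in xy.
by rewrite !inE => /andP[/eqP -> exy]; rewrite exy in nexy.
Qed.

Lemma dist_adj_le (T : finType) (e : rel T) x x' y :
  e x' x -> dist e x' y <= (dist e x y).+1.
Proof.
move=> exx; case: (ltnP (dist e x y) #|T|) => lt.
  have yb := subsetP (ball_adj (dist e x y) exx) _ (dist_ball lt).
  case: (ltnP (dist e x y).+1 #|T|) => lt2; first exact: dist_le.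
  exact: leq_trans (dist_size _ _ _) lt2.
by apply: leq_trans (dist_size _ _ _) _; apply: leq_trans lt _.
Qed.

Lemma dist_distinguish (T : finType) (e : rel T) u v w :
  w != u -> w != v -> e u w != e v w -> dist e u w != dist e v w.
Proof.
move=> wu wv; case euw: (e u w); case evw: (e v w) => // _.
  by rewrite (dist1 _ euw) ?(eq_sym u) // eq_sym dist_not1 ?evw // eq_sym.
by rewrite (dist1 _ evw) ?(eq_sym v) // dist_not1 ?euw // eq_sym.
Qed.

Lemma local_dim_le (T : finType) (e : rel T) W :
  local_resolving e W -> local_dim e <= #|W|.
Proof.
move=> rW; rewrite /local_dim; case: arg_minnP; first exact: setT_local_resolving.
by move=> W0 _ /(_ W rW).
Qed.

Lemma local_dim_spec (T : finType) (e : rel T) :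
  exists2 W, local_resolving e W & local_dim e = #|W|.
Proof.
rewrite /local_dim; case: arg_minnP; first exact: setT_local_resolving.
by move=> W0 r0 _; exists W0.
Qed.

Lemma parity_eq a b : a <= b.+1 -> b <= a.+1 -> odd a = odd b -> a = b.
Proof.
move=> h1 h2; case: (ltngtP a b) => // h.
  have -> : b = a.+1 by lia.
  by rewrite /=; case: (odd a).
have -> : a = b.+1 by lia.
by rewrite /=; case: (odd b).
Qed.

Lemma lower_count (T : finType) (e : rel T) (K W : {set T}) :
  symmetric e -> irreflexive e -> clique e K -> local_resolving e W ->
  #|K :\: W| <= 2 ^ #|W :\: K|.
Proof.
move=> sym irr clK rW.
pose f k := [set w in W :\: K | odd (dist e k w)].
have inj : {in K :\: W &, injective f}.
  move=> k k' /setDP[kK kW] /setDP[k'K k'W] fk; apply/eqP/negPn/negP => kk'.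
  have ekk : e k k'.
    by move/forallP: clK => /(_ k); rewrite kK /= => /forallP/(_ k'); rewrite k'K kk'.
  move/forallP: rW => /(_ k) /forallP /(_ k'); rewrite kW k'W ekk /=.
  case/existsP => w /andP[wW dw].
  have wk : w != k by apply: contraNneq kW => <-.
  have wk' : w != k' by apply: contraNneq k'W => <-.
  case: (boolP (w \in K)) => wK.
    have ek : e k w.
      by move/forallP: clK => /(_ k); rewrite kK /= => /forallP/(_ w); rewrite wK eq_sym wk.
    have ek' : e k' w.
      by move/forallP: clK => /(_ k'); rewrite k'K /= => /forallP/(_ w); rewrite wK eq_sym wk'.
    by rewrite (dist1 _ ek) ?(dist1 _ ek') 1?eq_sym // eqxx in dw.
  have wB : w \in W :\: K by rewrite inE wK wW.
  have hp : odd (dist e k w) = odd (dist e k' w).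
    have := congr1 (fun A : {set T} => w \in A) fk; rewrite /f !inE wK wW /=.
    by [].
  have := parity_eq (dist_adj_le w ekk) (dist_adj_le w (_ : e k' k)) hp.
  by rewrite sym ekk => /(_ isT) /eqP; rewrite (negbTE dw).
rewrite -(card_in_imset inj) -card_powerset; apply: subset_leq_card.
apply/subsetP => A /imsetP[k _ ->]; rewrite powersetE; apply/subsetP => w.
by rewrite inE => /andP[].
Qed.

Definition hh (T : finType) (e : rel T) x y := (x != y) && ~~ e x y.

Definition good (T : finType) (e : rel T) a b c :=
  [/\ a != b, a != c, b != c & forall u v, u \in [set a; b; c] -> v \in [set a; b; c] ->
     e u v -> exists2 w, w \notin [set a; b; c] & e u w != e v w].

Definition pgood (T : finType) (e : rel T) (S : {set T}) x y :=
  e x y -> exists2 w, w \notin S & e x w != e y w.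

Lemma good_intro (T : finType) (e : rel T) a b c :
  symmetric e -> irreflexive e -> a != b -> a != c -> b != c ->
  pgood e [set a; b; c] a b -> pgood e [set a; b; c] a c -> pgood e [set a; b; c] b c ->
  good e a b c.
Proof.
move=> sym irr ab ac bc pab pac pbc; split => // u v.
have rev x y : pgood e [set a; b; c] x y -> pgood e [set a; b; c] y x.
  by move=> p eyx; case: (p _) => [|w wS d]; [rewrite sym | exists w; rewrite // eq_sym].
by rewrite !inE => /orP[/orP[/eqP->|/eqP->]|/eqP->] /orP[/orP[/eqP->|/eqP->]|/eqP->]; rewrite ?irr //; apply: rev.
Qed.

Lemma good_res (T : finType) (e : rel T) a b c : good e a b c ->
  local_resolving e (~: [set a; b; c]) /\ #|~: [set a; b; c]| + 3 = #|T|.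
Proof.
case=> ab ac bc H; split.
  apply/forallP => u; apply/forallP => v; apply/implyP.
  rewrite !in_setC !negbK => /and3P[uS vS euv].
  have [w wS d] := H u v uS vS euv.
  apply/existsP; exists w; rewrite in_setC wS /=.
  apply: dist_distinguish => //; [apply: contraNneq wS => ->|apply: contraNneq wS => ->] => //.
have := cardsC [set a; b; c]; rewrite [[set a; b; c]]setUC cardsU1 cards2.
by rewrite !inE negb_or eq_sym ac eq_sym bc ab => <-; rewrite addnC.
Qed.

Lemma connect_inv (T : finType) (e : rel T) (P : pred T) x y :
  (forall u v, e u v -> P u -> P v) -> connect e x y -> P x -> P y.
Proof.
move=> st /connectP[p pth ->]; elim: p x pth => //= z p IH x /andP[exz pth] Px.
by apply: (IH z pth); apply: st Px.
Qed.

Lemma triple_exists (T : finType) (e : rel T) (x0 : T) :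
  symmetric e -> irreflexive e -> (forall x y, connect e x y) ->
  (forall p q : T, exists c d, [/\ hh e c d, c \notin [set p; q] & d \notin [set p; q]]) ->
  exists a b c, good e a b c.
Proof.
move=> sym irr conn tau.
case: (classic (exists a b c, good e a b c)) => // NG; exfalso.
have NG' a b c : ~ good e a b c by move=> g; apply: NG; exists a, b, c.
have hsym x y : hh e x y = hh e y x by rewrite /hh eq_sym sym.
have hirr x : hh e x x = false by rewrite /hh eqxx.
have hne x y : hh e x y -> x != y by case/andP.
have hnE x y : hh e x y -> e x y = false by case/andP => _ /negbTE.
have eh x y : x != y -> ~~ hh e x y -> e x y by rewrite /hh => -> /=; rewrite negbK.
have F a b c w : hh e b a -> hh e b c -> a != c -> w \notin [set a; b; c] ->
    hh e a w = hh e c w.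
  move=> hba hbc ac wS; apply/eqP; apply: contraT => neq.
  exfalso; apply: (NG' a b c); apply: good_intro => //.
  - by rewrite eq_sym hne.
  - by rewrite hne.
  - by move=> eab; move: (hnE _ _ hba); rewrite sym eab.
  - move=> _; exists w => //; move: wS neq; rewrite !inE !negb_or => /andP[/andP[wa _] wc].
    by rewrite /hh (eq_sym a w) wa (eq_sym c w) wc /=; case: (e a w); case: (e c w).
  - by move=> ebc; move: (hnE _ _ hbc); rewrite ebc.
have star a b : hh e a b -> (forall x, hh e a x -> x = b) -> False.
  move=> hab only; have [c [d [hcd cS dS]]] := tau a b.
  move: cS dS; rewrite !inE !negb_or => /andP[ca cb] /andP[da db].
  apply: (NG' a c d); apply: good_intro => //.
  - by rewrite eq_sym.
  - by rewrite eq_sym.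
  - exact: hne.
  - move=> _; exists b; first by rewrite !inE !negb_or eq_sym hne //= eq_sym cb eq_sym db.
    rewrite hnE //; case ecb: (e c b) => //; exfalso.
    have hbc : hh e b c by rewrite /hh (eq_sym b c) cb /= (sym b c) ecb.
    have ac' : a != c by rewrite eq_sym.
    have dS : d \notin [set a; b; c] by rewrite !inE !negb_or da db (eq_sym d c) (hne _ _ hcd).
    have hd := F a b c d (etrans (hsym b a) hab) hbc ac' dS.
    have /only dbE : hh e a d by rewrite hd.
    by rewrite dbE eqxx in db.
  - move=> _; exists b; first by rewrite !inE !negb_or eq_sym hne //= eq_sym cb eq_sym db.
    rewrite hnE //; case edb: (e d b) => //; exfalso.
    have hbd : hh e b d by rewrite /hh (eq_sym b d) db /= (sym b d) edb.
    have ad' : a != d by rewrite eq_sym.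
    have cS : c \notin [set a; b; d] by rewrite !inE !negb_or ca cb (hne _ _ hcd).
    have hc := F a b d c (etrans (hsym b a) hab) hbd ad' cS.
    have /only cbE : hh e a c by rewrite hc hsym.
    by rewrite cbE eqxx in cb.
  - by move=> ecd; move: (hnE _ _ hcd); rewrite ecd.
have [a [b [hab _ _]]] := tau x0 x0.
case: (classic (exists b', hh e a b' && (b' != b))); last first.
  move=> nb; apply: (star a b hab) => x hax; apply/eqP; apply: contraT => xb.
  by exfalso; apply: nb; exists x; rewrite hax.
case: (classic (exists a', hh e b a' && (a' != a))); last first.
  move=> na _; apply: (star b a); first by rewrite hsym.
  move=> x hbx; apply/eqP; apply: contraT => xa.
  by exfalso; apply: na; exists x; rewrite hbx.
move=> [a' /andP[hba' a'a]] [b' /andP[hab' b'b]].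
have hba : hh e b a by rewrite hsym.
case: (classic (exists u, ~~ hh e a u && ~~ hh e b u)); last first.
  move=> nu.
  have cov y : hh e a y || hh e b y.
    by apply: contraT; rewrite negb_or => hy; exfalso; apply: nu; exists y.
  have st x y : e x y -> hh e b x -> hh e b y.
    move=> exy hbx; case hby: (hh e b y) => //.
    have hay : hh e a y by move: (cov y); rewrite hby orbF.
    have yb : y != b.
      by apply/eqP => yb; move: (hnE _ _ hbx); rewrite sym -yb exy.
    case: (eqVneq x a) => [xa|xa].
      by move: (hnE _ _ hay); rewrite -xa exy.
    have yx : y != x by apply/eqP => yx; move: exy; rewrite yx irr.
    have ax : a != x by rewrite eq_sym.
    have yS : y \notin [set a; b; x] by rewrite !inE !negb_or (eq_sym y a) (hne _ _ hay) yb yx.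
    have := F a b x y hba hbx ax yS; rewrite hay => /esym /hnE.
    by rewrite exy.
  by have := connect_inv st (conn a b) hba; rewrite hirr.
move=> [u /andP[nhau nhbu]].
have au : a != u by apply: contraNneq nhbu => <-.
have bu : b != u by apply: contraNneq nhau => <-.
apply: (NG' a b u); apply: good_intro => //.
- exact: hne.
- by move=> eab; move: (hnE _ _ hab); rewrite eab.
- move=> _.
  have ub' : u != b' by apply: contraNneq nhau => ->.
  exists b'.
    by rewrite !inE !negb_or eq_sym (hne _ _ hab') b'b eq_sym ub'.
  have bb' : b != b' by rewrite eq_sym.
  have uS : u \notin [set b; a; b'] by rewrite !inE !negb_or (eq_sym u b) bu (eq_sym u a) au ub'.
  have := F b a b' u hab hab' bb' uS; rewrite (negbTE nhbu) => /esym hb'u.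
  rewrite hnE // (eh u b') // hsym hb'u //.
- move=> _.
  have ua' : u != a' by apply: contraNneq nhbu => ->.
  exists a'.
    by rewrite !inE !negb_or a'a eq_sym (hne _ _ hba') eq_sym ua'.
  have aa' : a != a' by rewrite eq_sym.
  have uS : u \notin [set a; b; a'] by rewrite !inE !negb_or (eq_sym u b) bu (eq_sym u a) au ua'.
  have := F a b a' u hba hba' aa' uS; rewrite (negbTE nhau) => /esym ha'u.
  rewrite hnE // (eh u a') // hsym ha'u //.
Qed.

Lemma max_clique (T : finType) (e : rel T) :
  exists2 K, clique e K & #|K| = clique_number e.
Proof.
have c0 : clique e set0 by apply/forallP => x; rewrite inE.
exists [arg max_(A > (set0 : {set T}) | clique e A) #|A|]; first by case: arg_maxnP.
by rewrite /clique_number (bigmax_eq_arg set0).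
Qed.

Lemma part1 (T : finType) (e : rel T) :
  simple_graph e -> connected_graph e -> clique_number e + 3 = #|T| ->
  #|T| - 8 <= local_dim e <= #|T| - 3.
Proof.
move=> [sym irr] [n0 conn] om.
apply/andP; split.
  rewrite -om.
  have [K clK cK] := max_clique e.
  have [W rW ->] := local_dim_spec e.
  have h1 := lower_count sym irr clK rW.
  have h2 : #|W :\: K| <= 3.
    have := cardsC K; rewrite cK -om => h.
    have : #|~: K| = 3 by lia.
    move=> <-; apply: subset_leq_card; apply/subsetP => x; rewrite !inE => /andP[xK _].
    by [].
  have h3 := cardsID W K.
  have h4 := cardsID K W.
  rewrite setIC in h4.
  move: h1 h2 h3 h4; case: #|W :\: K| => [|[|[|[|b]]]] //= h1 _ h3 h4; rewrite ?expnS ?expn0 in h1; lia.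
case/card_gt0P: n0 => x0 _.
have tau : forall p q : T, exists c d, [/\ hh e c d, c \notin [set p; q] & d \notin [set p; q]].
  move=> p q; set X := ~: [set p; q].
  have cX : ~~ clique e X.
    apply/negP => cX.
    have le : #|X| <= clique_number e :=
      @leq_bigmax_cond _ (fun A => clique e A) (fun A : {set T} => #|A|) X cX.
    have := cardsC [set p; q]; rewrite cards2 -/X -om => hc.
    lia.
  move/forallPn: cX => [c]; rewrite negb_imply => /andP[cXm /forallPn[d]].
  rewrite negb_imply => /andP[dXm]; rewrite negb_imply => /andP[cd necd].
  exists c, d; split; first by rewrite /hh cd.
    by move: cXm; rewrite in_setC.
  by move: dXm; rewrite in_setC.
have [a [b [c g]]] := triple_exists x0 sym irr conn tau.
have [rW cW] := good_res g.
have := local_dim_le rW; lia.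
Qed.

Lemma dist2 (T : finType) (e : rel T) u z w :
  2 < #|T| -> u != w -> ~~ e u w -> e u z -> e z w -> dist e u w = 2.
Proof.
move=> n3 uw neuw euz ezw.
have d2 : dist e u w <= 2.
  have zb : z \in ball e 1 u.
    by rewrite /= !inE; apply/orP; right; apply/existsP; exists u; rewrite !inE eqxx euz.
  apply: dist_le => //; rewrite [ball e 2 u]/= inE; apply/orP; right.
  by rewrite inE; apply/existsP; exists z; rewrite zb ezw.
have d1 := dist_not1 uw neuw.
case d0 : (dist e u w) => [|[|[|n]]]; rewrite ?d0 // in d1 d2.
have := @dist_ball T e u w; rewrite d0 /= inE => /(_ (leq_ltn_trans (leq0n 2) n3)) /eqP wu.
by rewrite wu eqxx in uw.
Qed.

Lemma card_ordP n (P : pred nat) : #|[set i : 'I_n | P i]| = count P (iota 0 n).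
Proof.
rewrite cardsE cardE /enum_mem size_filter -enumT -val_enum_ord count_map.
by apply: eq_count => i /=; rewrite ?inE.
Qed.

Definition adj2 (i j : nat) := (i != j) && ((i.+1 %% 5 == j) || (j.+1 %% 5 == i)).
Definition e2 : rel 'I_5 := fun i j => adj2 i j.

Lemma e2_simple : simple_graph e2.
Proof.
split; first by move=> i j; rewrite /e2 /adj2 eq_sym orbC.
by move=> i; rewrite /e2 /adj2 eqxx.
Qed.

Lemma e2_conn : connected_graph e2.
Proof.
split; first by rewrite card_ord.
have c0 x : connect e2 ord0 x.
  case: x => [[|[|[|[|[|?]]]]] H] //.
  - by apply/connectP; exists [::] => //; apply: val_inj.
  - by apply/connectP; exists [:: Ordinal H] => //=; rewrite /e2 /adj2.
  - by apply/connectP; exists [:: @Ordinal 5 1 isT; Ordinal H] => //=; rewrite /e2 /adj2.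
  - by apply/connectP; exists [:: @Ordinal 5 4 isT; Ordinal H] => //=; rewrite /e2 /adj2.
  - by apply/connectP; exists [:: Ordinal H] => //=; rewrite /e2 /adj2.
have sc := sym_connect_sym (proj1 e2_simple).
by move=> x y; apply: connect_trans (c0 y); rewrite sc.
Qed.

Lemma e2_tri : all (fun i => all (fun j => all (fun k =>
  ~~ (adj2 i j && adj2 j k && adj2 k i)) (iota 0 5)) (iota 0 5)) (iota 0 5).
Proof. by []. Qed.

Lemma e2_clique : clique_number e2 = 2.
Proof.
apply/eqP; rewrite eqn_leq; apply/andP; split.
  apply/bigmax_leqP => A clA; rewrite leqNgt; apply/negP => /card_gt2P.
  move=> [x [y [z [[xA yA zA] [xy yz zx]]]]].
  have ed a b : a \in A -> b \in A -> a != b -> e2 a b.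
    by move=> aA bA ab; move/forallP: clA => /(_ a); rewrite aA => /forallP /(_ b); rewrite bA ab.
  have := e2_tri; move/allP => /(_ x); rewrite mem_iota ltn_ord => /(_ isT).
  move/allP => /(_ y); rewrite mem_iota ltn_ord => /(_ isT).
  move/allP => /(_ z); rewrite mem_iota ltn_ord => /(_ isT).
  by rewrite -!/(e2 _ _) ed // ed // ed.
have c01 : clique e2 [set ord0; @Ordinal 5 1 isT].
  apply/forallP => x; apply/implyP => xS; apply/forallP => y; apply/implyP => yS.
  by move: xS yS; rewrite !inE => /orP[]/eqP-> /orP[]/eqP->.
have := @leq_bigmax_cond _ (fun A => clique e2 A) (fun A : {set 'I_5} => #|A|) _ c01.
by rewrite cards2.
Qed.

Lemma e2_dim : local_dim e2 = 2.
Proof.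
apply/eqP; rewrite eqn_leq; apply/andP; split.
  have := part1 e2_simple e2_conn; rewrite e2_clique card_ord => /(_ erefl) /andP[_].
  by [].
have [W rW ->] := local_dim_spec e2.
rewrite leqNgt; apply/negP => W1.
have bad (w u v zu zv : 'I_5) : (forall x, x \in W -> x = w) -> u != w -> v != w -> e2 u v ->
    ~~ e2 u w -> e2 u zu -> e2 zu w -> ~~ e2 v w -> e2 v zv -> e2 zv w -> False.
  move=> Ww uw vw euv nuw euz ezw nvw evz ezw'.
  have uW : u \notin W by apply/negP => /Ww uw'; rewrite uw' eqxx in uw.
  have vW : v \notin W by apply/negP => /Ww vw'; rewrite vw' eqxx in vw.
  move/forallP: rW => /(_ u) /forallP /(_ v); rewrite uW vW euv /=.
  case/existsP => w' /andP[/Ww -> dw].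
  have n3 : 2 < #|'I_5| by rewrite card_ord.
  by rewrite (dist2 n3 uw nuw euz ezw) (dist2 n3 vw nvw evz ezw') in dw.
have [w Ww] : exists w, forall x, x \in W -> x = w.
  case: (set_0Vmem W) => [->|[w wW]]; first by exists ord0 => x; rewrite inE.
  by exists w => x xW; move/card_le1P: W1 => /(_ w wW x); rewrite xW inE => /esym/eqP.
move: Ww; case: w => [[|[|[|[|[|?]]]]] H] // Ww.
- exact: (bad _ (@Ordinal 5 2 isT) (@Ordinal 5 3 isT) (@Ordinal 5 1 isT) (@Ordinal 5 4 isT) Ww).
- exact: (bad _ (@Ordinal 5 3 isT) (@Ordinal 5 4 isT) (@Ordinal 5 2 isT) (@Ordinal 5 0 isT) Ww).
- exact: (bad _ (@Ordinal 5 4 isT) (@Ordinal 5 0 isT) (@Ordinal 5 3 isT) (@Ordinal 5 1 isT) Ww).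
- exact: (bad _ (@Ordinal 5 0 isT) (@Ordinal 5 1 isT) (@Ordinal 5 4 isT) (@Ordinal 5 2 isT) Ww).
- exact: (bad _ (@Ordinal 5 1 isT) (@Ordinal 5 2 isT) (@Ordinal 5 0 isT) (@Ordinal 5 3 isT) Ww).
Qed.

Definition f1 (i j : nat) := (i < 8) && ((j < 8) || odd (i %/ 2 ^ (j - 8))).
Definition adj1 (i j : nat) := (i != j) && (f1 i j || f1 j i).
Definition e1 : rel 'I_11 := fun i j => adj1 i j.

Lemma e1_simple : simple_graph e1.
Proof.
split; first by move=> i j; rewrite /e1 /adj1 eq_sym orbC.
by move=> i; rewrite /e1 /adj1 eqxx.
Qed.

Definition h7 : 'I_11 := @Ordinal 11 7 isT.

Lemma e1_hub x : x != h7 -> e1 h7 x.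
Proof. by case: x => [[|[|[|[|[|[|[|[|[|[|[|?]]]]]]]]]]] H]. Qed.

Lemma e1_conn : connected_graph e1.
Proof.
split; first by rewrite card_ord.
have sc := sym_connect_sym (proj1 e1_simple).
have c0 x : connect e1 h7 x.
  case: (eqVneq x h7) => [->|xh]; first exact: connect0.
  by apply: connect1; apply: e1_hub.
by move=> x y; apply: connect_trans (c0 y); rewrite sc.
Qed.

Lemma e1_clique : clique_number e1 = 8.
Proof.
apply/eqP; rewrite eqn_leq; apply/andP; split.
  apply/bigmax_leqP => A clA.
  have ed a b : a \in A -> b \in A -> a != b -> e1 a b.
    by move=> aA bA ab; move/forallP: clA => /(_ a); rewrite aA => /forallP /(_ b); rewrite bA ab.
  case: (boolP [exists r in A, 8 <= r]).
    case/existsP => r /andP[rA r8].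
    have sub : A \subset [set x : 'I_11 | (x == r :> nat) || adj1 r x].
      apply/subsetP => x xA; rewrite inE; case: (eqVneq x r) => [->|xr].
        by rewrite eqxx.
      have rx : r != x by rewrite eq_sym.
      by apply/orP; right; exact: (ed r x rA xA rx).
    apply: leq_trans (subset_leq_card sub) _.
    move: r8 {rA sub}; case: r => [[|[|[|[|[|[|[|[|[|[|[|?]]]]]]]]]]] H] //= _.
    - by rewrite (card_ordP 11 (fun x => (x == 8) || adj1 8 x)).
    - by rewrite (card_ordP 11 (fun x => (x == 9) || adj1 9 x)).
    - by rewrite (card_ordP 11 (fun x => (x == 10) || adj1 10 x)).
  rewrite negb_exists => /forallP nr.
  have sub : A \subset [set x : 'I_11 | x < 8].
    apply/subsetP => x xA; rewrite inE; move: (nr x); rewrite xA /= -ltnNge.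
    by [].
  apply: leq_trans (subset_leq_card sub) _.
  by rewrite (card_ordP 11 (fun x => x < 8)).
have c8 : clique e1 [set x : 'I_11 | x < 8].
  apply/forallP => x; apply/implyP; rewrite inE => x8; apply/forallP => y; apply/implyP.
  rewrite inE => y8; apply/implyP => xy.
  by rewrite /e1 /adj1 xy /f1 x8 y8.
have := @leq_bigmax_cond _ (fun A => clique e1 A) (fun A : {set 'I_11} => #|A|) _ c8.
by rewrite (card_ordP 11 (fun x => x < 8)).
Qed.

Lemma e1_bits : all (fun u => all (fun v => (u == v) ||
  has (fun b => odd (u %/ 2 ^ b) != odd (v %/ 2 ^ b)) (iota 0 3)) (iota 0 8)) (iota 0 8).
Proof. by []. Qed.

Lemma adj1_bit u b : u < 8 -> adj1 u (8 + b) = odd (u %/ 2 ^ b).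
Proof.
move=> u8; rewrite /adj1 /f1 u8 addKn.
have -> : (8 + b < 8) = false by rewrite ltnNge leq_addr.
have -> : (u != 8 + b) = true by apply/eqP; lia.
by rewrite /= ?andbF ?orbF; case: (odd _).
Qed.

Lemma e1_dim : local_dim e1 = 3.
Proof.
apply/eqP; rewrite eqn_leq; apply/andP; split; last first.
  have := part1 e1_simple e1_conn; rewrite e1_clique card_ord => /(_ erefl) /andP[].
  by [].
set W := [set x : 'I_11 | 8 <= x].
have cW : #|W| = 3 by rewrite (card_ordP 11 (fun x => 8 <= x)).
suff rW : local_resolving e1 W by rewrite -{2}cW; exact: local_dim_le.
apply/forallP => u; apply/forallP => v; apply/implyP; rewrite !inE -!ltnNge.
move=> /and3P[u8 v8 euv].
have uv : u != v by apply/eqP => uv; move: euv; rewrite uv (proj2 e1_simple).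
have := e1_bits; move/allP => /(_ u); rewrite mem_iota u8 => /(_ isT).
move/allP => /(_ v); rewrite mem_iota v8 => /(_ isT).
rewrite (_ : (val u == val v) = false); last by apply/negbTE.
case/hasP => b; rewrite mem_iota add0n => b3 db.
have wlt : 8 + b < 11 by lia.
set w : 'I_11 := Ordinal wlt.
apply/existsP; exists w; apply/andP; split.
  by rewrite inE /w /= leq_addr.
apply: dist_distinguish.
- by apply/eqP => /(congr1 val) /=; lia.
- by apply/eqP => /(congr1 val) /=; lia.
by rewrite /e1 /= !adj1_bit.
Qed.

Theorem corollary2p3 :
  (forall (T : finType) (e : rel T),
     simple_graph e -> connected_graph e ->
     clique_number e + 3 = #|T| ->
     #|T| - 8 <= local_dim e <= #|T| - 3)
  /\ (exists (T : finType) (e : rel T),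
        [/\ simple_graph e, connected_graph e,
            clique_number e + 3 = #|T| & local_dim e + 8 = #|T|])
  /\ (exists (T : finType) (e : rel T),
        [/\ simple_graph e, connected_graph e,
            clique_number e + 3 = #|T| & local_dim e + 3 = #|T|]).
Proof.
split; first by move=> T e; exact: part1.
split.
  exists 'I_11, e1; split.
  - exact: e1_simple.
  - exact: e1_conn.
  - by rewrite e1_clique card_ord.
  - by rewrite e1_dim card_ord.
exists 'I_5, e2; split.
- exact: e2_simple.
- exact: e2_conn.
- by rewrite e2_clique card_ord.
- by rewrite e2_dim card_ord.
Qed.
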